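(* Let $n$ be an odd perfect square divisible by $p^4$ for some prime $p\ge7$. Then $C_{S(n)^*}=5$.
   Context: For a natural number $n$, $\mathbb Z_n=\mathbb Z/n\mathbb Z$, $S(n)=\{x^2:x\in\mathbb Z_n\}$, $S(n)^*=S(n)\setminus\{0\}$. For $A\subseteq\mathbb Z_n$, a sequence $(y_1,\dots,y_t)$ ($t\ge1$) in $\mathbb Z_n$ is an $A$-weighted zero-sum sequence if there exist $a_1,\dots,a_t\in A$ with $\sum a_iy_i=0$. $C_A(n)$ is the least positive integer $t$ such that every sequence of length $t$ in $\mathbb Z_n$ has a nonempty subsequence of consecutive terms that is an $A$-weighted zero-sum sequence; $C_{S(n)^*}=C_{S(n)^*}(n)$. *)

(* Defs.v *)
From mathcomp Require Import all_boot all_order all_algebra.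
Set Implicit Arguments. Unset Strict Implicit. Unset Printing Implicit Defensive.
Import GRing.Theory.
Local Open Scope ring_scope.

(* S(n) = set of squares in Z_n ; S(n)^* = nonzero squares.  Used with 1 < n. *)
Definition sq_set (n : nat) : {set 'Z_n} := [set x * x | x : 'Z_n].
Definition sq_set_star (n : nat) : {set 'Z_n} := sq_set n :\ 0.

Definition weighted_zero_sum (n : nat) (A : {set 'Z_n}) (s : seq 'Z_n) : Prop :=
  exists a : seq 'Z_n, [/\ size a = size s, all (fun x => x \in A) a &
    \sum_(i < size s) a`_i * s`_i = 0].

Definition consec_zs_property (n : nat) (A : {set 'Z_n}) (t : nat) : Prop :=
  forall s : seq 'Z_n, size s = t ->
    exists i j : nat, [/\ (i < j)%N, (j <= t)%N &
      weighted_zero_sum A (drop i (take j s))].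

Definition is_C (n : nat) (A : {set 'Z_n}) (t : nat) : Prop :=
  [/\ (0 < t)%N, consec_zs_property A t &
      forall t', (0 < t')%N -> (t' < t)%N -> ~ consec_zs_property A t'].

(* Main.v *)
Require Import Defs.
From mathcomp Require Import all_boot all_order all_algebra.
From mathcomp Require Import zify ring.
Set Implicit Arguments. Unset Strict Implicit. Unset Printing Implicit Defensive.
Import GRing.Theory.
Local Open Scope ring_scope.

Definition issq (p : nat) (x : 'F_p) : bool := [exists y : 'F_p, y * y == x].

Lemma issqP p (x : 'F_p) : reflect (exists y, y * y = x) (issq x).
Proof. by apply: (iffP existsP) => [[y /eqP]|[y Hy]]; exists y => //; apply/eqP. Qed.

Lemma issq_mul p (a b : 'F_p) : issq a -> issq b -> issq (a*b).
Proof. by move=> /issqP[x <-] /issqP[y <-]; apply/issqP; exists (x*y); ring. Qed.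

Lemma issq0 p : issq (0 : 'F_p).
Proof. by apply/issqP; exists 0; rewrite mulr0. Qed.

Lemma issq_sq p (x : 'F_p) : issq (x * x).
Proof. by apply/issqP; exists x. Qed.

Lemma nsq_nz p (x : 'F_p) : ~~ issq x -> x != 0.
Proof. by apply: contraNneq => ->; apply: issq0. Qed.

Lemma issq_inv p (x : 'F_p) : issq x -> issq x^-1.
Proof. by move=> /issqP[y <-]; apply/issqP; exists y^-1; rewrite invfM. Qed.

Lemma nsq_inv p (x : 'F_p) : ~~ issq x -> ~~ issq x^-1.
Proof. by apply: contra => /issq_inv; rewrite invrK. Qed.

Lemma Fp_eq0 (p n : nat) : prime p -> ((n%:R : 'F_p) == 0) = (p %| n)%N.
Proof. by move=> pr; rewrite -(inj_eq val_inj) /= val_Fp_nat. Qed.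

Lemma Fp_natE (p : nat) (x : 'F_p) : (val x)%:R = x.
Proof. exact: natr_Zp. Qed.

Lemma Fp_num_nz p k : prime p -> (7 <= p)%N -> k \in [:: 1; 2; 3; 4; 5; 9; 10]%N ->
  (k%:R : 'F_p) != 0.
Proof.
move=> pr p7 hk; rewrite Fp_eq0 //.
have h2 : ~~ (p %| 2)%N by apply/negP => /dvdn_leq => /(_ isT); lia.
have h3 : ~~ (p %| 3)%N by apply/negP => /dvdn_leq => /(_ isT); lia.
have h5 : ~~ (p %| 5)%N by apply/negP => /dvdn_leq => /(_ isT); lia.
move: hk; rewrite !inE => /or4P [/eqP->|/eqP->|/eqP->|/or4P[/eqP->|/eqP->|/eqP->|/eqP->]] //.
- by apply/negP => /dvdn_leq => /(_ isT); lia.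
- by rewrite (_ : 4 = 2 * 2)%N // Euclid_dvdM // negb_or h2.
- by rewrite (_ : 9 = 3 * 3)%N // Euclid_dvdM // negb_or h3.
- by rewrite (_ : 10 = 2 * 5)%N // Euclid_dvdM // negb_or h2.
Qed.

Lemma Fp_nat_inj p i j : prime p -> (i < p)%N -> (j < p)%N -> (i%:R : 'F_p) = j%:R -> i = j.
Proof.
move=> pr ip jp /(congr1 val) /=; rewrite !val_Fp_nat // !modn_small //.
Qed.

Lemma card_sq_ge p : prime p -> odd p -> (p./2.+1 <= #|[set x : 'F_p | issq x]|)%N.
Proof.
move=> pr op.
have hp : (p./2 + p./2 + 1 = p)%N.
  by have := odd_double_half p; rewrite op -addnn; lia.
pose g := fun i : 'I_(p./2.+1) => (i%:R : 'F_p) * i%:R.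
have ginj : injective g.
  move=> i j /eqP; rewrite /g -subr_eq0.
  have -> : (i%:R * i%:R - j%:R * j%:R : 'F_p) = (i%:R - j%:R) * (i%:R + j%:R) by ring.
  rewrite mulf_eq0 subr_eq0 -natrD Fp_eq0 // => /orP[/eqP|].
    move=> /Fp_nat_inj; have := ltn_ord i; have := ltn_ord j => hi hj.
    by move=> /(_ pr ltac:(lia) ltac:(lia)) => /val_inj.
  move=> hd; have := ltn_ord i; have := ltn_ord j => hi hj.
  case: (posnP (i + j)) => [e|pos]; last by have := dvdn_leq pos hd; lia.
  by apply: val_inj => /=; lia.
rewrite -{1}(card_ord p./2.+1) -(card_imset _ ginj).
apply: subset_leq_card; apply/subsetP => x /imsetP[i _ ->]; rewrite inE; exact: issq_sq.
Qed.

Lemma nsq_mul p (a b : 'F_p) : prime p -> odd p -> ~~ issq a -> ~~ issq b -> issq (a*b).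
Proof.
move=> pr op na nb; case: (boolP (issq (a*b))) => // nab; exfalso.
set Q := [set x : 'F_p | issq x].
have hQ := card_sq_ge pr op.
have hp : (p./2 + p./2 + 1 = p)%N.
  by have := odd_double_half p; rewrite op -addnn; lia.
have anz := nsq_nz na.
pose phi := fun x : 'F_p => a * x.
have phinj : injective phi by apply: mulfI.
have sub : phi @: (b |: (Q :\ 0)) \subset ~: Q.
  apply/subsetP => y /imsetP[x]; rewrite !inE => /orP[/eqP->|/andP[xnz xq]] ->; rewrite /phi.
    exact: nab.
  apply/negP => /issqP[w hw]; move/issqP: xq => [v hv].
  have vnz : v != 0 by apply: contraNneq xnz => v0; rewrite -hv v0 mulr0.
  move/negP: na; apply; apply/issqP; exists (w / v).
  by rewrite -[a](mulfK xnz) -hw -hv; field.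
have := subset_leq_card sub.
rewrite card_imset // cardsU1 !inE (negbTE nb) andbF /=.
rewrite -/Q in hQ.
have := cardsC Q; rewrite card_Fp //.
have := cardsD1 0 Q; rewrite inE issq0 /=.
move=> h1 h2 h3; move: hQ hp h1 h2 h3.
move: (#|Q|) (#|~: Q|) (#|Q :\ 0|) (p./2) => x1 x2 x3 x4; lia.
Qed.

Lemma exists_nsq p : prime p -> odd p -> exists t : 'F_p, ~~ issq t.
Proof.
move=> pr op; case: (boolP [exists t : 'F_p, ~~ issq t]) => [/existsP //|].
rewrite negb_exists => /forallP all; exfalso.
pose f := fun x : 'F_p => x * x.
have ft : f @: setT = setT.
  apply/setP => y; rewrite !inE; move: (all y); rewrite negbK => /issqP[x <-].
  by apply/imsetP; exists x.
have : #|f @: setT| == #|[set: 'F_p]| by rewrite ft.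
move/imset_injP => finj.
have : f 1 = f (-1) by rewrite /f mulrNN.
move/finj => /(_ (in_setT _) (in_setT _)) /eqP.
rewrite -subr_eq0 opprK -mulr2n (Fp_eq0 2 pr) => h.
have := dvdn_leq (isT : (0 < 2)%N) h; have := prime_gt1 pr => h1 h2.
have p2 : p = 2%N by lia.
by rewrite p2 in op.
Qed.

Lemma prime7_odd p : prime p -> (7 <= p)%N -> odd p.
Proof. by move=> pr p7; case: (even_prime pr) => // e; move: p7; rewrite e. Qed.

Lemma cons_sq p : prime p -> (7 <= p)%N ->
  exists g k : 'F_p, [/\ g != 0, k != 0 & g * g + 1 = k * k].
Proof.
move=> pr p7; have op := prime7_odd pr p7.
have nz k : k \in [:: 1; 2; 3; 4; 5; 9; 10]%N -> (k%:R : 'F_p) != 0.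
  by move=> hk; apply: Fp_num_nz.
case: (boolP (issq (2%:R : 'F_p))) => [/issqP[k hk]|n2].
  exists 1, k; split; rewrite ?oner_neq0 // -?hk ?mul1r //.
    by apply: contraTneq (nz 2%N isT) => k0; rewrite -hk k0 mulr0.
case: (boolP (issq (5%:R : 'F_p))) => [/issqP[k hk]|n5].
  exists 2%:R, k; split; first exact: nz.
    by apply: contraTneq (nz 5%N isT) => k0; rewrite -hk k0 mulr0.
  by rewrite hk -!natrM natr1.
have := nsq_mul pr op n2 n5; rewrite -natrM => /issqP[k hk].
exists 3%:R, k; split; first exact: nz.
  by apply: contraTneq (nz 10%N isT) => k0; rewrite -hk k0 mulr0.
by rewrite hk -!natrM natr1.
Qed.

Lemma cons_nsq p : prime p -> (7 <= p)%N ->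
  exists g : 'F_p, g != 0 /\ ~~ issq (g * g + 1).
Proof.
move=> pr p7; have op := prime7_odd pr p7.
have [t nt] := exists_nsq pr op.
rewrite -(Fp_natE t) in nt; move: (val t) nt => k.
elim: k => [|k IH]; first by rewrite issq0.
case: (boolP (issq (k%:R : 'F_p))) => [/issqP[g hg]|]; last by move=> nk _; exact: IH.
case: (eqVneq g 0) => [g0|gnz].
  rewrite g0 mul0r in hg; rewrite -natr1 -hg add0r => n1.
  by move: n1; rewrite -(mulr1 1) issq_sq.
by move=> nk; exists g; split => //; rewrite hg natr1.
Qed.

Lemma sum_two_sq p (d : 'F_p) : prime p -> (7 <= p)%N -> d != 0 ->
  exists u v : 'F_p, [/\ u != 0, v != 0 & u * u + v * v = d].
Proof.
move=> pr p7 dnz; have op := prime7_odd pr p7.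
case: (boolP (issq d)) => [/issqP[e he]|nd].
  have enz : e != 0 by apply: contraNneq dnz => e0; rewrite -he e0 mulr0.
  have [g [k [gnz knz hgk]]] := cons_sq pr p7.
  exists (e * g / k), (e / k); split.
  - by rewrite !mulf_neq0 ?invr_eq0.
  - by rewrite !mulf_neq0 ?invr_eq0.
  rewrite -he; apply: (mulIf (mulf_neq0 knz knz)).
  have -> : (e * g / k * (e * g / k) + e / k * (e / k)) * (k * k)
          = e * e * (g * g + 1) * (k / k) * (k / k) by ring.
  by rewrite hgk divff // !mulr1; ring.
have [g [gnz ng]] := cons_nsq pr p7.
have := nsq_mul pr op nd (nsq_inv ng) => /issqP[l hl].
have hnz := nsq_nz ng.
have lnz : l != 0.
  apply: contraNneq dnz => l0.
  have : d * (g * g + 1)^-1 == 0 by rewrite -hl l0 mul0r.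
  by rewrite mulf_eq0 invr_eq0 (negbTE hnz) orbF.
exists (l * g), l; split; rewrite ?mulf_neq0 //.
have -> : l * g * (l * g) + l * l = (l * l) * (g * g + 1) by ring.
by rewrite hl mulfVK.
Qed.

Lemma pair_sq p (a b c : 'F_p) : prime p -> (7 <= p)%N -> a != 0 -> b != 0 ->
  issq (a * b) -> c != 0 ->
  exists x y : 'F_p, [/\ x != 0, y != 0 & x * x * a + y * y * b = c].
Proof.
move=> pr p7 anz bnz /issqP[w hw] cnz.
have wnz : w != 0 by apply: contraTneq (mulf_neq0 anz bnz) => w0; rewrite -hw w0 mulr0 eqxx.
have [u [v [unz vnz huv]]] := sum_two_sq pr p7 (mulf_neq0 cnz (invr_neq0 anz)).
exists u, (v * a / w); split; rewrite ?mulf_neq0 ?invr_neq0 //.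
have hb : b = w * w / a by rewrite hw mulrC mulKf.
rewrite hb.
have -> : u * u * a + v * a / w * (v * a / w) * (w * w / a) = (u * u + v * v) * a * ((w / w) * (w / w)) * (a / a).
  by field; rewrite anz wnz.
by rewrite huv !divff // !mulr1 divfK.
Qed.

Lemma zs_helper p (T : finType) (I : {set T}) (z : T -> 'F_p) ia ib ic :
  prime p -> (7 <= p)%N -> (forall i, i \in I -> z i != 0) ->
  ia \in I -> ib \in I -> ic \in I -> ia != ib -> ia != ic -> ib != ic ->
  issq (z ia * z ib) ->
  exists s : T -> 'F_p, (forall i, i \in I -> s i != 0) /\
     \sum_(i in I) s i * s i * z i = 0.
Proof.
move=> pr p7 znz ha hb hc dab dac dbc sq.
set R := I :\ ia :\ ib.
have cR : ic \in R.
  rewrite !inE hc andbT; apply/andP; split; by rewrite eq_sym.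
set s1 := \sum_(i in R :\ ic) z i.
pose e : 'F_p := if s1 + z ic == 0 then 2%:R else 1.
pose s0 := fun i => if i == ic then e else 1.
have hs : \sum_(i in R) s0 i * s0 i * z i = e * e * z ic + s1.
  rewrite (bigD1 ic) //= /s0 eqxx; congr (_ + _).
  rewrite /s1; apply: eq_big => [i|i]; first by rewrite !inE andbC.
  by move=> /andP[_ /negbTE ->]; rewrite !mul1r.
have nz2 : (2%:R : 'F_p) != 0 by apply: Fp_num_nz.
have nz3 : (3%:R : 'F_p) != 0 by apply: Fp_num_nz.
have enz : e != 0 by rewrite /e; case: ifP; rewrite ?oner_neq0.
have snz : - (e * e * z ic + s1) != 0.
  rewrite oppr_eq0 /e; case: ifP => [/eqP h|/negbT]; last by rewrite !mul1r addrC.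
  have -> : s1 = - z ic by apply/eqP; rewrite -addr_eq0; apply/eqP.
  have -> : 2%:R * 2%:R * z ic - z ic = 3%:R * z ic :> 'F_p.
    by ring.
  by rewrite mulf_neq0 // znz.
have [x [y [xnz ynz hxy]]] := pair_sq pr p7 (znz _ ha) (znz _ hb) sq snz.
exists (fun i => if i == ia then x else if i == ib then y else s0 i); split.
  by move=> i _; case: ifP => // _; case: ifP => // _; rewrite /s0; case: ifP.
rewrite (bigD1 ia) //= eqxx (bigD1 ib) /=; last by rewrite hb eq_sym.
rewrite eqxx [ib == ia]eq_sym (negbTE dab).
have -> : \sum_(i | (i \in I) && (i != ia) && (i != ib))
    (if i == ia then x else if i == ib then y else s0 i) *
    (if i == ia then x else if i == ib then y else s0 i) * z i
  = \sum_(i in R) s0 i * s0 i * z i.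
  apply: eq_big => [i|i]; first by rewrite !inE; case: (i \in I); case: (i != ia); case: (i != ib).
  by move=> /andP[/andP[_ /negbTE ->] /negbTE ->].
by rewrite hs addrA hxy addNr.
Qed.

Lemma three_class p (a b c : 'F_p) : prime p -> odd p -> a != 0 -> b != 0 -> c != 0 ->
  [|| issq (a * b), issq (a * c) | issq (b * c)].
Proof.
move=> pr op anz bnz cnz.
case: (boolP (issq (a*b))) => //= nab; case: (boolP (issq (a*c))) => //= nac.
have := nsq_mul pr op nab nac => /issqP[w hw].
apply/issqP; exists (w / a).
have -> : b * c = (a * b) * (a * c) / (a * a) by field.
by rewrite -hw; field.
Qed.

Lemma zs3 p (T : finType) (I : {set T}) (z : T -> 'F_p) :
  prime p -> (7 <= p)%N -> (3 <= #|I|)%N -> (forall i, i \in I -> z i != 0) ->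
  exists s : T -> 'F_p, (forall i, i \in I -> s i != 0) /\
     \sum_(i in I) s i * s i * z i = 0.
Proof.
move=> pr p7 cI znz.
have op := prime7_odd pr p7.
have [i1 h1] : exists i1, i1 \in I by apply/card_gt0P; lia.
have [i2 h2] : exists i2, i2 \in I :\ i1.
  by apply/card_gt0P; have := cardsD1 i1 I; rewrite h1; lia.
have [i3 h3] : exists i3, i3 \in I :\ i1 :\ i2.
  apply/card_gt0P; have := cardsD1 i2 (I :\ i1); rewrite h2.
  have := cardsD1 i1 I; rewrite h1; lia.
move: h2 h3; rewrite !inE => /andP[d12 h2] /and3P[d23 d13 h3].
have := three_class pr op (znz _ h1) (znz _ h2) (znz _ h3).
case/or3P => sq.
- by apply: (zs_helper pr p7 znz h1 h2 h3) => //; rewrite eq_sym.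
- apply: (zs_helper pr p7 znz h1 h3 h2) => //; by rewrite eq_sym.
- apply: (zs_helper pr p7 znz h2 h3 h1) => //; by rewrite eq_sym.
Qed.

Lemma Fp_dvdE p n : prime p -> (p %| n)%N = ((n%:R : 'F_p) == 0).
Proof. by move=> pr; rewrite Fp_eq0. Qed.

Lemma hensel p s z R k : prime p -> odd p -> ~~ (p %| s)%N -> ~~ (p %| z)%N ->
  (p %| s * s * z + R)%N ->
  exists t, ~~ (p %| t)%N /\ (p ^ k.+1 %| t * t * z + R)%N.
Proof.
move=> pr op ns nz h0.
elim: k => [|k [t [nt ht]]]; first by exists s; rewrite expn1.
set X := (t * t * z + R)%N in ht.
set w := (X %/ p ^ k.+1)%N.
have hX : X = (w * p ^ k.+1)%N by rewrite /w divnK.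
have n2 : ~~ (p %| 2)%N.
  apply/negP => h; have h2 := dvdn_leq (isT : (0 < 2)%N) h; have := prime_gt1 pr => h1.
  have p2 : p = 2%N by lia.
  by rewrite p2 in op.
pose c : 'F_p := (2 * t * z)%:R.
have cnz : c != 0 by rewrite /c Fp_eq0 // !Euclid_dvdM // !negb_or n2 nt nz.
pose j : 'F_p := - (w%:R) / c.
pose J := val j.
have hj : (p %| w + 2 * t * z * J)%N.
  rewrite Fp_dvdE // natrD natrM Fp_natE -/c /j mulrC divfK // addrN //.
exists (t + p ^ k.+1 * J)%N; split.
  apply/negP => hd; move/negP: nt; apply.
  have H : (p %| p ^ k.+1 * J)%N by rewrite expnS -mulnA dvdn_mulr.
  by rewrite dvdn_addl in hd.
have -> : ((t + p ^ k.+1 * J) * (t + p ^ k.+1 * J) * z + R =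
          X + p ^ k.+1 * (2 * t * z * J) + p ^ k.+1 * p ^ k.+1 * (J * J * z))%N.
  by rewrite /X; ring.
rewrite hX.
have -> : (w * p ^ k.+1 + p ^ k.+1 * (2 * t * z * J) + p ^ k.+1 * p ^ k.+1 * (J * J * z)
   = p ^ k.+1 * (w + 2 * t * z * J + p ^ k.+1 * (J * J * z)))%N by ring.
rewrite expnSr dvdn_pmul2l ?expn_gt0 ?prime_gt0 //.
by apply: dvdn_add => //; rewrite expnS -mulnA dvdn_mulr.
Qed.

Lemma lemmaA p (T : finType) (I : {set T}) (z : T -> nat) R0 :
  prime p -> (7 <= p)%N -> (3 <= #|I|)%N -> (forall i, i \in I -> ~~ (p %| z i)%N) ->
  (p %| R0)%N ->
  exists t : T -> nat, (forall i, i \in I -> ~~ (p %| t i)%N) /\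
     (p ^ 4 %| (\sum_(i in I) t i * t i * z i) + R0)%N.
Proof.
move=> pr p7 cI nz hR.
have op := prime7_odd pr p7.
have zF : forall i, i \in I -> ((z i)%:R : 'F_p) != 0 by move=> i hi; rewrite -Fp_dvdE // nz.
have [s [snz hs]] := zs3 pr p7 cI zF.
have nS i : i \in I -> ~~ (p %| val (s i))%N by move=> hi; rewrite Fp_dvdE // Fp_natE snz.
have [i0 h0] : exists i0, i0 \in I by apply/card_gt0P; lia.
set Rest := ((\sum_(i in I :\ i0) val (s i) * val (s i) * z i) + R0)%N.
have hp : (p %| val (s i0) * val (s i0) * z i0 + Rest)%N.
  rewrite /Rest addnA; apply: dvdn_add => //.
  rewrite -(@big_setD1 _ _ _ _ i0 I (fun i => val (s i) * val (s i) * z i)%N h0) Fp_dvdE //.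
  rewrite natr_sum (eq_bigr (fun i => s i * s i * (z i)%:R)) ?hs // => i _.
  by rewrite !natrM Fp_natE.
have [t0 [nt0 ht0]] := hensel 3 pr op (nS _ h0) (nz _ h0) hp.
exists (fun i => if i == i0 then t0 else val (s i)); split.
  by move=> i hi; case: ifP => // _; apply: nS.
rewrite (big_setD1 _ h0) /= eqxx -addnA.
set Y := (\sum_(i in I :\ i0) _)%N.
have -> : Y = (\sum_(i in I :\ i0) val (s i) * val (s i) * z i)%N.
  by apply: eq_bigr => i; rewrite !inE => /andP[/negbTE -> _].
by [].
Qed.

Lemma Zn_eq0 n k : (1 < n)%N -> ((k%:R : 'Z_n) == 0) = (n %| k)%N.
Proof. by move=> n1; rewrite -(inj_eq val_inj) /= val_Zp_nat. Qed.

Lemma Zn_natE n (x : 'Z_n) : (val x)%:R = x.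
Proof. exact: natr_Zp. Qed.

Lemma sq_star_in n x : (1 < n)%N -> ~~ (n %| x * x)%N ->
  ((x * x)%:R : 'Z_n) \in sq_set_star n.
Proof.
move=> n1 nd; rewrite !inE natrM; apply/andP; split.
  by rewrite -natrM Zn_eq0.
by apply/imsetP; exists x%:R.
Qed.

Lemma sq_star_nat n (a : 'Z_n) : a \in sq_set_star n ->
  exists x, a = (x * x)%:R /\ ~~ (n %| x * x)%N.
Proof.
Abort.

Lemma block_sum (R : pzRingType) (s4 a : seq R) i j :
  (i < j)%N -> (j <= size s4)%N -> size a = (j - i)%N ->
  \sum_(k < size (drop i (take j s4))) a`_k * (drop i (take j s4))`_k
  = \sum_(l < size s4) (if (i <= l < j)%N then a`_(l - i) else 0) * s4`_l.
Proof.
move=> ij js sa.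
have sz : size (drop i (take j s4)) = (j - i)%N by rewrite size_drop size_take_min; lia.
rewrite sz -(big_mkord xpredT (fun k => a`_k * (drop i (take j s4))`_k)).
rewrite -(big_mkord xpredT (fun l => (if (i <= l < j)%N then a`_(l - i) else 0) * s4`_l)).
set F := fun l => (if (i <= l < j)%N then a`_(l - i) else 0) * s4`_l.
rewrite (@big_cat_nat _ _ _ i 0 (size s4)) //=; last by lia.
rewrite (@big_cat_nat _ _ _ j i (size s4)) //=; last by lia.
have E1 : \sum_(0 <= l < i) F l = 0.
  rewrite big1_seq // => l; rewrite mem_index_iota => /andP[_ h].
  by rewrite /F; case: ifP => [/andP[h1 h2]|_]; [exfalso; lia | rewrite mul0r].
have E2 : \sum_(j <= l < size s4) F l = 0.
  rewrite big1_seq // => l /andP[_]; rewrite mem_index_iota => /andP[h _].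
  by rewrite /F; case: ifP => [/andP[h1 h2]|_]; [exfalso; lia | rewrite mul0r].
rewrite E1 E2 add0r addr0.
have -> : \sum_(i <= l < j) F l = \sum_(0 <= k < j - i) F (k + i)%N.
  by rewrite -{1}[i]add0n big_addn.
apply: eq_big_nat => k /andP[_ hk].
rewrite /F (_ : (i <= k + i < j)%N = true) ?addnK; last by apply/andP; split; lia.
by rewrite nth_drop nth_take ?[(k + i)%N]addnC //; lia.
Qed.

Lemma sq4_div p w : prime p -> (p ^ 4 %| w * w)%N -> (p ^ 2 %| w)%N.
Proof.
move=> pr; case: (posnP w) => [->|wp]; first by rewrite dvdn0.
rewrite !pfactor_dvdn ?muln_gt0 ?wp // lognM //; lia.
Qed.

Lemma nz_weight n M p w : n = (M * M * p ^ 4)%N -> (0 < M)%N -> prime p ->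
  ~~ (p ^ 2 %| w)%N -> ~~ (n %| (M * w) * (M * w))%N.
Proof.
move=> -> M0 pr nw; apply/negP => h; move/negP: nw; apply; apply: (sq4_div pr).
have : (M * M * p ^ 4 %| M * M * (w * w))%N.
  by rewrite (_ : (M * M * (w * w) = M * w * (M * w))%N) //; ring.
by rewrite dvdn_pmul2l ?muln_gt0 ?M0.
Qed.

Lemma ub_weights n M p (s : seq 'Z_n) (w : 'I_5 -> nat) :
  n = (M * M * p ^ 4)%N -> (0 < M)%N -> prime p -> size s = 5%N ->
  (forall i, ~~ (p ^ 2 %| w i)%N) ->
  (p ^ 4 %| \sum_(i : 'I_5) w i * w i * val (nth (0%R : 'Z_n) s i))%N ->
  weighted_zero_sum (sq_set_star n) s.
Proof.
move=> hn M0 pr hs nw hd.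
have n1 : (1 < n)%N.
  have p1 := prime_gt1 pr.
  have h16 : (2 ^ 4 <= p ^ 4)%N by rewrite leq_exp2r.
  have hM : (0 < M * M)%N by rewrite muln_gt0 M0.
  rewrite hn; move: (p ^ 4)%N h16 (M * M)%N hM => P4 h16 MM hM; nia.
pose a := mkseq (fun k => ((M * w (inord k)) * (M * w (inord k)))%:R : 'Z_n) 5.
exists a; split; first by rewrite size_mkseq hs.
  apply/allP => x /mapP[k _ ->]; apply: sq_star_in => //; exact: (nz_weight hn M0 pr (nw _)).
rewrite -(big_mkord xpredT (fun i => a`_i * s`_i)) hs big_mkord.
rewrite (eq_bigr (fun i : 'I_5 => ((M * M * (w i * w i * val (nth (0%R : 'Z_n) s i)))%N)%:R)); last first.
  move=> i _; rewrite /a nth_mkseq // inord_val -[X in _ * X = _]Zn_natE -natrM.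
  by congr (_%:R); ring.
apply/eqP; rewrite -natr_sum Zn_eq0 // -big_distrr /= [X in (X %| _)%N]hn.
by rewrite dvdn_pmul2l // muln_gt0 M0.
Qed.

Lemma singleton_zs n M p (s : seq 'Z_n) i :
  n = (M * M * p ^ 4)%N -> (0 < M)%N -> prime p -> (i < size s)%N ->
  (p ^ 2 %| val (nth (0%R : 'Z_n) s i))%N ->
  weighted_zero_sum (sq_set_star n) (drop i (take i.+1 s)).
Proof.
move=> hn M0 pr hi hd.
have n1 : (1 < n)%N.
  have p1 := prime_gt1 pr.
  have h16 : (2 ^ 4 <= p ^ 4)%N by rewrite leq_exp2r.
  have hM : (0 < M * M)%N by rewrite muln_gt0 M0.
  rewrite hn; move: (p ^ 4)%N h16 (M * M)%N hM => P4 h16 MM hM; nia.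
rewrite (take_nth 0 hi) -cats1 drop_size_cat ?size_take ?hi //.
exists [:: ((M * p) * (M * p))%:R]; split => //.
  rewrite /= andbT; apply: sq_star_in => //; apply: (nz_weight hn M0 pr).
  apply/negP => h; have := dvdn_leq (prime_gt0 pr) h; have := prime_gt1 pr.
  have e : (p ^ 2 = p * p)%N by ring.
  rewrite e; nia.
rewrite big_ord1 /= -[s`_i]Zn_natE -natrM; apply/eqP; rewrite Zn_eq0 // [X in (X %| _)%N]hn.
move: hd => /dvdnP[k ->].
have -> : (M * p * (M * p) * (k * p ^ 2) = (M * M * p ^ 4) * k)%N by ring.
by apply: dvdn_mulr.
Qed.

Lemma ub_main n M p : n = (M * M * p ^ 4)%N -> (0 < M)%N -> prime p -> (7 <= p)%N ->
  consec_zs_property (sq_set_star n) 5.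
Proof.
move=> hn M0 pr p7 s hs.
pose y := fun i : 'I_5 => val (nth (0%R : 'Z_n) s i).
case: (pickP (fun i : 'I_5 => (p ^ 2 %| y i)%N)) => [i hi | hno].
  exists i, i.+1; split; [by [] | exact: ltn_ord | ].
  by apply: (singleton_zs hn M0 pr) => //; rewrite hs.
exists 0%N, 5%N; split => //.
rewrite drop0 take_oversize ?hs //.
have p2 : ~~ (p ^ 2 %| p)%N.
  apply/negP => h; have := dvdn_leq (prime_gt0 pr) h; have := prime_gt1 pr.
  have e : (p ^ 2 = p * p)%N by ring.
  rewrite e; nia.
have p21 : ~~ (p ^ 2 %| 1)%N.
  apply/negP => h; have := dvdn_leq (isT : (0 < 1)%N) h; have := prime_gt1 pr.
  have e : (p ^ 2 = p * p)%N by ring.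
  rewrite e; nia.
have ndiv t : ~~ (p %| t)%N -> ~~ (p ^ 2 %| t)%N.
  apply: contra => h; apply: dvdn_trans h; by rewrite dvdn_exp.
set U := [set i : 'I_5 | ~~ (p %| y i)%N].
have cU : (#|U| + #|~: U| = 5)%N by rewrite cardsC card_ord.
case: (leqP 3 #|U|) => hU.
  have hz : forall i, i \in U -> ~~ (p %| y i)%N by move=> i; rewrite inE.
  have hR : (p %| \sum_(i in ~: U) y i)%N.
    by apply: dvdn_sum => i; rewrite !inE negbK.
  have [t [nt ht]] := lemmaA pr p7 hU hz hR.
  apply: (ub_weights hn M0 pr hs (w := fun i => if i \in U then t i else 1%N)).
    by move=> i; case: ifP => [hi|_] //; apply: ndiv; apply: nt.
  rewrite (bigID (fun i => i \in U)) /=.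
  rewrite [X in (_ %| X + _)%N](eq_bigr (fun i => t i * t i * y i)); last by move=> i ->.
  rewrite [X in (_ %| _ + X)%N](eq_big (fun i => i \in ~: U) (fun i => y i)); first exact: ht.
    by move=> i; rewrite in_setC.
  by move=> i /negbTE ->; rewrite !mul1n.
have hP : (3 <= #|~: U|)%N by lia.
pose z := fun i => (y i %/ p)%N.
have hy : forall i, i \in ~: U -> y i = (z i * p)%N.
  by move=> i; rewrite !inE negbK => h; rewrite divnK.
have hz : forall i, i \in ~: U -> ~~ (p %| z i)%N.
  move=> i hi; apply/negP => /dvdnP[k hk]; have := hno i; rewrite /= hy // hk.
  have -> : (k * p * p = k * p ^ 2)%N by ring.
  by rewrite dvdn_mull.
have hR : (p %| p * \sum_(i in U) y i)%N by apply: dvdn_mulr.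
have [t [nt ht]] := lemmaA pr p7 hP hz hR.
apply: (ub_weights hn M0 pr hs (w := fun i => if i \in ~: U then t i else p)).
  by move=> i; case: ifP => [hi|_] //; apply: ndiv; apply: nt.
rewrite (bigID (fun i => i \in ~: U)) /=.
rewrite [X in (_ %| X + _)%N](eq_bigr (fun i => p * (t i * t i * z i))%N); last first.
  by move=> i hi; rewrite hi; have := hy i hi; rewrite /y => ->; ring.
rewrite [X in (_ %| _ + X)%N](eq_big (fun i => i \in U) (fun i => p * (p * y i)))%N; last first.
- by move=> i; rewrite in_setC => /negbTE ->; rewrite /y; ring.
- by move=> i; rewrite in_setC negbK.
rewrite -!big_distrr /= -mulnDr; apply: dvdn_mull.
exact: ht.
Qed.

Definition nonres (q c : nat) := forall z, ~~ (q %| z * z + c)%N.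

Lemma lemN q c a b : prime q -> nonres q c -> (q %| a * a + c * (b * b))%N ->
  (q %| a)%N /\ (q %| b)%N.
Proof.
move=> pr nr h.
have hb : (q %| b)%N.
  apply/negPn/negP => nb.
  have Bnz : (b%:R : 'F_q) != 0 by rewrite Fp_eq0.
  move: h; rewrite Fp_dvdE // natrD !natrM => /eqP h.
  have := nr (val ((a%:R : 'F_q) / b%:R)); rewrite Fp_dvdE // natrD natrM Fp_natE.
  have -> : (a%:R / b%:R * (a%:R / b%:R) + c%:R : 'F_q)
           = (a%:R * a%:R + c%:R * (b%:R * b%:R)) / (b%:R * b%:R).
    by field.
  by rewrite h mul0r eqxx.
split => //.
have : (q %| a * a)%N.
  by rewrite -(dvdn_addl _ (dvdn_mull c (dvdn_mull b hb))).
by rewrite Euclid_dvdM // orbb.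
Qed.

Lemma claim q c r' e : prime q -> nonres q c -> ~~ (q %| r')%N ->
  forall X1 X2 X3 X4,
  (q ^ (2 * e) %| X1 * X1 + X2 * X2 * (q * r') + X3 * X3 * c + X4 * X4 * (c * (q * r')))%N ->
  [/\ (q ^ e %| X1)%N, (q ^ e %| X2)%N, (q ^ e %| X3)%N & (q ^ e %| X4)%N].
Proof.
move=> pr nr nr'; elim: e => [|e IH] X1 X2 X3 X4 h; first by rewrite !expn0 !dvd1n.
have q0 : (0 < q)%N by apply: prime_gt0.
have hq : (q %| X1 * X1 + c * (X3 * X3) + q * (r' * (X2 * X2 + c * (X4 * X4))))%N.
  have -> : (X1 * X1 + c * (X3 * X3) + q * (r' * (X2 * X2 + c * (X4 * X4)))
     = X1 * X1 + X2 * X2 * (q * r') + X3 * X3 * c + X4 * X4 * (c * (q * r')))%N by ring.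
  apply: dvdn_trans h; rewrite (_ : (2 * e.+1 = (2 * e).+2)%N); last by lia.
  by rewrite expnS dvdn_mulr.
have [/dvdnP[Y1 e1] /dvdnP[Y3 e3]] : (q %| X1)%N /\ (q %| X3)%N.
  apply: lemN pr nr _; move: hq; rewrite dvdn_addl //.
  by apply: dvdn_mulr.
have h2 : (q * q %| q * (r' * (X2 * X2 + c * (X4 * X4))))%N.
  have : (q * q %| X1 * X1 + X2 * X2 * (q * r') + X3 * X3 * c + X4 * X4 * (c * (q * r')))%N.
    apply: dvdn_trans h; rewrite (_ : (2 * e.+1 = (2 * e).+2)%N); last by lia.
    by rewrite !expnS mulnA dvdn_mulr.
  have -> : (X1 * X1 + X2 * X2 * (q * r') + X3 * X3 * c + X4 * X4 * (c * (q * r'))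
     = q * q * (Y1 * Y1 + c * (Y3 * Y3)) + q * (r' * (X2 * X2 + c * (X4 * X4))))%N.
    by rewrite e1 e3; ring.
  by rewrite dvdn_addr // dvdn_mulr.
rewrite dvdn_pmul2l // Euclid_dvdM // (negbTE nr') /= in h2.
have [/dvdnP[Y2 e2] /dvdnP[Y4 e4]] := lemN pr nr h2.
have h' : (q ^ (2 * e) %| Y1 * Y1 + Y2 * Y2 * (q * r') + Y3 * Y3 * c + Y4 * Y4 * (c * (q * r')))%N.
  rewrite -(@dvdn_pmul2l (q * q)) ?muln_gt0 ?q0 //.
  have -> : (q * q * (Y1 * Y1 + Y2 * Y2 * (q * r') + Y3 * Y3 * c + Y4 * Y4 * (c * (q * r')))
     = X1 * X1 + X2 * X2 * (q * r') + X3 * X3 * c + X4 * X4 * (c * (q * r')))%N.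
    by rewrite e1 e2 e3 e4; ring.
  move: h; rewrite (_ : (2 * e.+1 = (2 * e).+2)%N); last by lia.
  by rewrite !expnS mulnA.
have [d1 d2 d3 d4] := IH _ _ _ _ h'.
by rewrite e1 e2 e3 e4 expnSr; split; apply: dvdn_mul.
Qed.

Lemma nonres_single q : prime q -> odd q -> exists c, nonres q c.
Proof.
move=> pr oq; have [t nt] := exists_nsq pr oq.
exists (val (- t)) => z; rewrite Fp_dvdE // natrD Fp_natE natrM subr_eq0.
apply: contra nt => /eqP <-; exact: issq_sq.
Qed.

Lemma nonres_mod q c c' : prime q -> c = c' %[mod q] -> nonres q c' -> nonres q c.
Proof.
move=> pr hc nr z; have := nr z; rewrite !Fp_dvdE // !natrD -(Fp_nat_mod pr c) hc.
by rewrite Fp_nat_mod.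
Qed.

Lemma prime_in_prod q l : prime q -> all prime l -> (q %| \prod_(r <- l) r)%N -> q \in l.
Proof.
move=> pr; elim: l => [|a l IH] /=; first by rewrite big_nil dvdn1 => _ /eqP q1; rewrite q1 in pr.
move=> /andP[pa al]; rewrite big_cons Euclid_dvdM // inE => /orP[h|h].
  by rewrite -(dvdn_prime2 pr pa) h.
by rewrite IH ?orbT.
Qed.

Lemma prod_split q l : q \in l -> uniq l -> all prime l ->
  exists r', \prod_(r <- l) r = (q * r')%N /\ ~~ (q %| r')%N.
Proof.
move=> ql ul al; exists (\prod_(r <- rem q l) r); split; first by rewrite (big_rem q ql).
apply/negP => /(prime_in_prod (allP al q ql)).
have al' : all prime (rem q l) by apply/allP => x /mem_rem /(allP al).
by move=> /(_ al'); rewrite mem_rem_uniqF.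
Qed.

Lemma nonres_list l : all prime l -> uniq l -> all odd l ->
  exists c, forall q, q \in l -> nonres q c.
Proof.
elim: l => [|q l IH] /=; first by exists 0%N.
move=> /andP[pq pl] /andP[ql ul] /andP[oq ol].
have [c' hc'] := IH pl ul ol.
have [c1 hc1] := nonres_single pq oq.
set P := \prod_(r <- l) r.
have cop : coprime q P.
  rewrite prime_coprime //; apply/negP => /(prime_in_prod pq pl).
  by rewrite (negbTE ql).
exists (chinese q P c1 c') => r; rewrite inE => /orP[/eqP ->|rl].
  by apply: (nonres_mod pq (chinese_modl cop c1 c')).
have pr := allP pl r rl.
apply: (nonres_mod pr _ (hc' r rl)).
have rP : (r %| P)%N by rewrite /P (big_rem r rl) dvdn_mulr.
by rewrite -(modn_dvdm _ rP) chinese_modr // (modn_dvdm _ rP).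
Qed.

Lemma all_primes m : all prime (primes m).
Proof. by apply/allP => x; rewrite mem_primes => /andP[]. Qed.

Lemma lb_nat m c X1 X2 X3 X4 : (0 < m)%N -> odd m ->
  (forall q, q \in primes m -> nonres q c) ->
  (m * m %| X1 * X1 + X2 * X2 * (\prod_(q <- primes m) q) + X3 * X3 * c
            + X4 * X4 * (c * (\prod_(q <- primes m) q)))%N ->
  [/\ (m %| X1)%N, (m %| X2)%N, (m %| X3)%N & (m %| X4)%N].
Proof.
move=> m0 om hc h.
have key : forall q, q \in \pi(m) ->
    [/\ (m`_q %| X1)%N, (m`_q %| X2)%N, (m`_q %| X3)%N & (m`_q %| X4)%N].
  move=> q qm; rewrite [q \in _]/= in qm.
  have pq : prime q by move: qm; rewrite mem_primes => /andP[].
  have [r' [hr nr']] := prod_split qm (primes_uniq m) (all_primes m).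
  rewrite hr in h.
  rewrite p_part; apply: (claim pq (hc q qm) nr').
  apply: dvdn_trans h.
  rewrite (_ : (2 * logn q m = logn q m + logn q m)%N); last by lia.
  by rewrite expnD dvdn_mul // pfactor_dvdnn.
by split; apply/(dvdn_partP _ m0) => q /key [].
Qed.

Lemma all_odd_primes m : odd m -> all odd (primes m).
Proof.
move=> om; apply/allP => q; rewrite mem_primes => /and3P[pq m0 qm].
case: (even_prime pq) => // q2; move: qm; rewrite q2 dvdn2 om //.
Qed.

Lemma lb_core m c (b : nat -> 'Z_(m * m)) : (1 < m)%N -> odd m ->
  (forall q, q \in primes m -> nonres q c) ->
  (forall l, b l \in sq_set (m * m)) ->
  \sum_(l < 4) b l * [:: 1; (\prod_(q <- primes m) q)%:R; c%:R;
                        (c * \prod_(q <- primes m) q)%:R]`_l = 0 ->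
  forall l, (l < 4)%N -> b l = 0.
Proof.
move=> m1 om hc hb hs.
have n1 : (1 < m * m)%N by nia.
have hx : forall l, exists X, b l = (X * X)%:R.
  move=> l; have /imsetP[x _ ->] := hb l; exists (val x).
  by rewrite natrM Zn_natE.
have [X0 e0] := hx 0%N; have [X1 e1] := hx 1%N.
have [X2 e2] := hx 2%N; have [X3 e3] := hx 3%N.
move: hs; rewrite !big_ord_recl big_ord0 /= e0 e1 e2 e3 addr0 mulr1.
rewrite -!natrM -!natrD => /eqP; rewrite Zn_eq0 // => h.
rewrite !addnA in h.
have [d0 d1 d2 d3] := lb_nat (ltnW m1) om hc h.
have z : forall X, (m %| X)%N -> ((X * X)%:R : 'Z_(m * m)) = 0.
  by move=> X hX; apply/eqP; rewrite Zn_eq0 // dvdn_mul.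
by case=> [|[|[|[|]]]] //= _; rewrite ?e0 ?e1 ?e2 ?e3 z.
Qed.

Lemma lb_block m c i j : (1 < m)%N -> odd m ->
  (forall q, q \in primes m -> nonres q c) -> (i < j)%N -> (j <= 4)%N ->
  ~ weighted_zero_sum (sq_set_star (m * m))
      (drop i (take j [:: 1; (\prod_(q <- primes m) q)%:R; c%:R;
                        (c * \prod_(q <- primes m) q)%:R])).
Proof.
move=> m1 om hc ij j4 [a [sa alla hs]].
have sz : size (drop i (take j [:: 1; (\prod_(q <- primes m) q)%:R; c%:R;
                        (c * \prod_(q <- primes m) q)%:R] : seq 'Z_(m * m))) = (j - i)%N.
  by rewrite size_drop size_take_min /=; lia.
rewrite sz in sa.
rewrite block_sum // /= in hs.
have hin : forall k, (k < j - i)%N -> a`_k \in sq_set_star (m * m).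
  by move=> k hk; apply: (allP alla); apply: mem_nth; rewrite sa.
pose b := fun l => if (i <= l < j)%N then a`_(l - i) else 0.
have hb : forall l, b l \in sq_set (m * m).
  move=> l; rewrite /b; case: ifP => [/andP[h1 h2]|_].
    by have := hin (l - i)%N ltac:(lia); rewrite !inE => /andP[].
  apply/imsetP; exists 0 => //; apply/esym; apply: mul0r.
have := lb_core m1 om hc hb hs (leq_trans ij j4).
rewrite /b (_ : (i <= i < j)%N = true); last by apply/andP; split; lia.
rewrite subnn => h0.
by move: (hin 0%N ltac:(lia)); rewrite h0 !inE eqxx.
Qed.


Local Close Scope ring_scope.

Theorem mainTheorem18 (n : nat) :
  odd n -> (exists m : nat, n = (m * m)%N) ->
  (exists p : nat, [/\ prime p, (7 <= p)%N & (p ^ 4 %| n)%N]) ->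
  is_C (sq_set_star n) 5.
Proof.
move=> on [m hm] [p [pr p7 pd]]; subst n.
have om : odd m by move: on; rewrite oddM => /andP[].
have m0 : (0 < m)%N by case: m om {on pd}.
have [M hM] : exists M, m = (M * p ^ 2)%N.
  by apply/dvdnP; apply: sq4_div pr pd.
have M0 : (0 < M)%N by move: m0; rewrite hM muln_gt0 => /andP[].
have hn : (m * m = M * M * p ^ 4)%N by rewrite hM; ring.
have m1 : (1 < m)%N.
  rewrite hM; have := prime_gt1 pr => p1.
  have : (2 ^ 2 <= p ^ 2)%N by rewrite leq_exp2r.
  move: (p ^ 2)%N => P2; nia.
have [c hc] := nonres_list (all_primes m) (primes_uniq m) (all_odd_primes om).
split => //; first exact: (ub_main hn M0 pr p7).
move=> t t0 t5 hP.
have := hP (take t ([:: 1; (\prod_(q <- primes m) q)%:R; c%:R;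
                        (c * \prod_(q <- primes m) q)%:R])%R).
rewrite size_take_min /= (minn_idPl (_ : t <= 4)); last by lia.
move=> /(_ erefl) [i [j [ij jt hw]]].
rewrite -take_min (minn_idPl jt) in hw.
by apply: (lb_block m1 om hc ij _ hw); lia.
Qed.
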